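(* Let $k\ge-1$ and let $w_0:\mathbb{R}\to\mathbb{R}$ be the odd function with $w_0(x)=x$ for $x\in[0,1)$ and $w_0(x)=x^{k+1}$ for $x\ge1$. Let $p(t,y)=\frac{1}{\sqrt{4\pi t}}\int_{\mathbb{R}}e^{-\frac{(y-z)^2}{4t}}w_0(z)\,dz$ for $t>0$ (and $p(0,\cdot)=w_0$) be the solution of $p_t=p_{yy}$ on $(0,+\infty)\times\mathbb{R}$ with $p(0,\cdot)=w_0$. Then for every $t_0>0$ there exist constants $0<C_1<C_2$ such that $C_1y^{k+1}\le p(t,y)\le C_2y^{k+1}$ for all $t\in[0,t_0]$ and all $y\ge\max(\sqrt t,1)$. *)

(* Defs.v *)
From HB Require Import structures.
From mathcomp Require Import all_boot all_order all_algebra.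
From mathcomp Require Import all_classical all_reals all_analysis.
Set Implicit Arguments. Unset Strict Implicit. Unset Printing Implicit Defensive.
Import Order.TTheory GRing.Theory Num.Theory.
Import numFieldNormedType.Exports.
Local Open Scope classical_set_scope.
Local Open Scope ring_scope.

Definition w0_pos {R : realType} (k : R) (x : R) : R :=
  if x < 1 then x else x `^ (k + 1).

Definition w0 {R : realType} (k : R) (x : R) : R :=
  if 0 <= x then w0_pos k x else - w0_pos k (- x).

Definition heat_p {R : realType} (k : R) (t y : R) : R :=
  if t <= 0 then w0 k y
  else (Num.sqrt (4 * pi * t))^-1 *
       (\int[@lebesgue_measure R]_(z in [set: R])
          (expR (- ((y - z) ^+ 2) / (4 * t)) * w0 k z)).

(* Main.v *)
Require Import Defs.
From HB Require Import structures.
From mathcomp Require Import all_boot all_order all_algebra.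
From mathcomp Require Import all_classical all_reals all_analysis.
From mathcomp Require Import ring lra measurable_realfun.
Set Implicit Arguments. Unset Strict Implicit. Unset Printing Implicit Defensive.
Import Order.TTheory GRing.Theory Num.Theory.
Import numFieldNormedType.Exports.
Local Open Scope classical_set_scope.
Local Open Scope ring_scope.

Definition pw {R : realType} (K x : R) : R := expR (K * ln (Num.max x 1)).

Lemma pw_cont {R : realType} (K : R) : continuous (pw K).
Proof.
move=> x; rewrite /pw.
apply: continuous_comp; last exact: continuous_expR.
apply: continuousM; first exact: cvg_cst.
apply: continuous_comp.
  apply: continuous_max; [exact: cvg_id | exact: cvg_cst].
apply: continuous_ln; by rewrite lt_max ltr01 orbT.
Qed.

Lemma pw_le1 {R : realType} (K x : R) : x <= 1 -> pw K x = 1.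
Proof. by move=> x1; rewrite /pw (max_idPr x1) ln1 mulr0 expR0. Qed.

Lemma pw_ge1 {R : realType} (K x : R) : 1 <= x -> pw K x = x `^ K.
Proof.
move=> x1; rewrite /pw (max_idPl x1) /powR gt_eqF ?(lt_le_trans ltr01)//.
Qed.

Lemma w0E {R : realType} (k : R) x :
  w0 k x = pw (k+1) x - pw (k+1) (-x) + Num.max (-1) (Num.min x 1).
Proof.
rewrite /w0 /w0_pos.
case: (leP 0 x) => x0.
  rewrite (@pw_le1 _ _ (-x)); last by rewrite (le_trans _ ler01)// oppr_le0.
  case: (ltP x 1) => x1.
    rewrite pw_le1 ?ltW// subrr add0r (max_idPr _)//.
    by rewrite (le_trans _ x0)// oppr_le0.
  rewrite pw_ge1// (max_idPr _) ?subrK//.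
rewrite pw_le1; last by rewrite ltW// (lt_trans x0).
rewrite (min_idPl _); last by rewrite ltW// (lt_trans x0).
case: (ltP (-x) 1) => x1.
  rewrite pw_le1 ?ltW// subrr add0r (max_idPr _) ?opprK//.
  by rewrite lerNl ltW.
rewrite (pw_ge1 _ x1) (max_idPl _); last by rewrite lerNr.
by rewrite addrAC subrr add0r.
Qed.

Lemma w0_cont {R : realType} (k : R) : continuous (w0 k).
Proof.
move=> x.
have -> : w0 k = fun x => pw (k+1) x - pw (k+1) (-x) + Num.max (-1) (Num.min x 1).
  by apply/funext => z; rewrite w0E.
apply: (@continuousD _ _ _ (fun x => pw (k+1) x - pw (k+1) (-x)) (fun x => Num.max (-1) (Num.min x 1))).
  apply: (@continuousB _ _ _ (pw (k+1)) (fun x => pw (k+1) (-x))).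
- exact: pw_cont.
- apply: continuous_comp; [exact: continuousN cvg_id| exact: pw_cont].
- apply: continuous_max; first exact: cvg_cst.
  apply: continuous_min; [exact: cvg_id | exact: cvg_cst].
Qed.

Lemma powR_ge1 {R : realType} (K y : R) : 0 <= K -> 1 <= y -> 1 <= y `^ K.
Proof. by move=> K0 y1; rewrite -(powRr0 y) ler_powR. Qed.

Lemma w0_pos_ge0 {R : realType} (k a : R) : 0 <= a -> 0 <= w0_pos k a.
Proof. by move=> a0; rewrite /w0_pos; case: ifP => // _; exact: powR_ge0. Qed.

Lemma w0_pos_bound {R : realType} (k y a : R) : -1 <= k -> 1 <= y -> 0 <= a ->
  w0_pos k a <= y `^ (k+1) * expR ((k+1) * `|a - y|).
Proof.
move=> hk y1 a0.
have K0 : 0 <= k + 1 by lra.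
have e1 : 1 <= expR `|a - y| by rewrite -expR0 ler_expR.
rewrite [(k+1) * _]mulrC expRM -powRM ?expR_ge0 ?(le_trans ler01)//.
have b1 : 1 <= y * expR `|a - y| by rewrite -(mulr1 1) ler_pM.
rewrite /w0_pos; case: ltP => a1.
  by rewrite (le_trans (ltW a1))// powR_ge1.
apply: ge0_ler_powR => //; first by rewrite nnegrE (le_trans ler01).
have := expR_ge1Dx `|a - y|.
have := ler_norm (a - y).
nra.
Qed.

Lemma w0_abs {R : realType} (k x : R) : `|w0 k x| = w0_pos k `|x|.
Proof.
rewrite /w0; case: leP => x0.
  by rewrite ger0_norm ?w0_pos_ge0// ger0_norm.
rewrite normrN ger0_norm ?ltr0_norm// w0_pos_ge0// oppr_ge0 ltW//.
Qed.

Lemma w0_bound {R : realType} (k y x : R) : -1 <= k -> 1 <= y ->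
  `|w0 k x| <= y `^ (k+1) * expR ((k+1) * `|x - y|).
Proof.
move=> hk y1; rewrite w0_abs.
apply: (le_trans (w0_pos_bound hk y1 (normr_ge0 x))).
rewrite ler_pM2l; last by rewrite (lt_le_trans ltr01)// powR_ge1//; lra.
rewrite ler_expR ler_wpM2l; last first.
  have := ler_dist_dist x y.
  by rewrite (ger0_norm (le_trans ler01 y1)).
all: try lra.
Qed.

Lemma gauss_dom {R : realType} (t t0 K u : R) : 0 < t -> t <= t0 -> 0 <= K ->
  expR (- (u ^+ 2) / (4 * t)) * expR (K * `|u|) <=
  expR (2 * t0 * K ^+ 2) * expR (- (u ^+ 2) / (8 * t)).
Proof.
move=> t0' tt0 K0; rewrite -!expRD ler_expR.
have u2 : u ^+ 2 = `|u| ^+ 2 by rewrite real_normK ?num_real.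
rewrite u2; set v := `|u|.
have v0 : 0 <= v by exact: normr_ge0.
set a := v ^+ 2 / (4 * t); set b := v ^+ 2 / (8 * t).
have ha : a = 2 * b by rewrite /a /b; field; lra.
have hb : b * (8 * t) = v ^+ 2 by rewrite /b mulfVK //; lra.
rewrite !mulNr.
have sq : 0 <= 16 * t * t * K ^+ 2 - 8 * t * K * v + v ^+ 2.
  have -> : 16 * t * t * K ^+ 2 - 8 * t * K * v + v ^+ 2 = (4 * t * K - v) ^+ 2 by ring.
  exact: sqr_ge0.
have tt : t * (t * K ^+ 2) <= t * (t0 * K ^+ 2).
  by apply: ler_wpM2l; [lra | apply: ler_wpM2r; [exact: sqr_ge0 | exact: tt0]].
rewrite -/a -/b ha; rewrite -hb in sq.
nra.
Qed.

Definition gg {R : realType} (k t y : R) (z : R) : R :=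
  expR (- ((y - z) ^+ 2) / (4 * t)) * w0 k z.

Lemma gg_cont {R : realType} (k t y : R) : continuous (gg k t y).
Proof.
move=> x; rewrite /gg.
apply: (@continuousM _ _ (fun z => expR (- ((y - z) ^+ 2) / (4 * t))) (w0 k)); last exact: w0_cont.
apply: continuous_comp; last exact: continuous_expR.
apply: (@continuousM _ _ (fun z => - ((y - z) ^+ 2)) (fun=> (4 * t)^-1)); last exact: cvg_cst.
apply: continuousN.
apply: (@continuousM _ _ (fun z => y - z) (fun z => y - z));
  apply: continuousB; (exact: cvg_cst || exact: cvg_id).
Qed.

Lemma heat_pE {R : realType} (k t y : R) : 0 < t ->
  heat_p k t y = (Num.sqrt (4 * pi * t))^-1 *
     \int[@lebesgue_measure R]_(z in [set: R]) gg k t y z.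
Proof. by move=> t0; rewrite /heat_p leNgt t0. Qed.

Lemma gg_meas {R : realType} (k t y : R) : measurable_fun setT (gg k t y).
Proof.
by apply: continuous_measurable_fun; exact: gg_cont.
Qed.

Lemma gg_bound {R : realType} (k t t0 y z : R) : -1 <= k -> 0 < t -> t <= t0 -> 1 <= y ->
  `|gg k t y z| <= y `^ (k+1) * expR (2 * t0 * (k+1) ^+ 2) * expR (- ((z - y) ^+ 2) / (8 * t)).
Proof.
move=> hk t0' tt0 y1.
rewrite /gg normrM ger0_norm ?expR_ge0//.
apply: (le_trans (ler_wpM2l (expR_ge0 _) (w0_bound z hk y1))).
rewrite -(opprB z y) sqrrN mulrCA -mulrA ler_wpM2l//; first by rewrite powR_ge0.
apply: gauss_dom => //; lra.
Qed.

Lemma normal_pdf_sq {R : realType} (t y z : R) : 0 < t ->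
  normal_pdf y (Num.sqrt (4 * t)) z =
  normal_peak (Num.sqrt (4 * t)) * expR (- ((z - y) ^+ 2) / (8 * t)).
Proof.
move=> t0; rewrite normal_pdfE; last by rewrite gt_eqF// sqrtr_gt0; lra.
rewrite /normal_fun sqr_sqrtr; last by lra.
by have -> : 4 * t *+ 2 = 8 * t by rewrite -mulr_natr; ring.
Qed.

Local Notation mu := lebesgue_measure.

Lemma dom_integrable {R : realType} (k t t0 y : R) : -1 <= k -> 0 < t -> t <= t0 -> 1 <= y ->
  mu.-integrable [set: R] (fun z => ((y `^ (k+1) * expR (2 * t0 * (k+1) ^+ 2) /
     normal_peak (Num.sqrt (4 * t))) * normal_pdf y (Num.sqrt (4 * t)) z)%:E).
Proof.
move=> hk t0' tt0 y1.
under eq_fun do rewrite EFinM.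
exact: integrableZl (integrable_normal_pdf _ _).
Qed.

Lemma dom_eq {R : realType} (k t t0 y z : R) : 0 < t ->
  (y `^ (k+1) * expR (2 * t0 * (k+1) ^+ 2) /
     normal_peak (Num.sqrt (4 * t))) * normal_pdf y (Num.sqrt (4 * t)) z =
  y `^ (k+1) * expR (2 * t0 * (k+1) ^+ 2) * expR (- ((z - y) ^+ 2) / (8 * t)).
Proof.
move=> t0'; rewrite normal_pdf_sq// mulrA divfK//.
by rewrite gt_eqF// normal_peak_gt0// gt_eqF// sqrtr_gt0; lra.
Qed.

Lemma gg_integrable {R : realType} (k t t0 y : R) : -1 <= k -> 0 < t -> t <= t0 -> 1 <= y ->
  mu.-integrable [set: R] (EFin \o gg k t y).
Proof.
move=> hk t0' tt0 y1.
apply: (le_integrable _ _ _ (dom_integrable hk t0' tt0 y1)) => //.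
  by apply/measurable_EFinP; exact: gg_meas.
move=> z _ /=; rewrite lee_fin dom_eq//.
apply: (le_trans (gg_bound z hk t0' tt0 y1)).
by rewrite ler_norm.
Qed.

Lemma Rint_gg_le {R : realType} (k t t0 y : R) : -1 <= k -> 0 < t -> t <= t0 -> 1 <= y ->
  \int[mu]_(z in [set: R]) gg k t y z <=
  y `^ (k+1) * expR (2 * t0 * (k+1) ^+ 2) / normal_peak (Num.sqrt (4 * t)).
Proof.
move=> hk t0' tt0 y1.
set c := _ / _.
apply: (le_trans (ler_norm _)).
apply: (le_trans (le_normr_Rintegral measurableT (gg_integrable hk t0' tt0 y1))).
have -> : c = \int[mu]_(z in [set: R]) (c * normal_pdf y (Num.sqrt (4 * t)) z).
  rewrite RintegralZl//; last exact: integrable_normal_pdf.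
  by rewrite /Rintegral integral_normal_pdf mulr1.
apply: le_Rintegral => //.
- apply: (le_integrable _ _ _ (gg_integrable hk t0' tt0 y1)) => //.
    apply/measurable_EFinP; apply: measurableT_comp => //; exact: gg_meas.
  by move=> z _ /=; rewrite normr_id.
- exact: dom_integrable hk t0' tt0 y1.
- move=> z _; rewrite dom_eq//; exact: gg_bound.
Qed.

Lemma heat_upper {R : realType} (k t t0 y : R) : -1 <= k -> 0 < t -> t <= t0 -> 1 <= y ->
  heat_p k t y <= 2 * expR (2 * t0 * (k+1) ^+ 2) * y `^ (k+1).
Proof.
move=> hk t0' tt0 y1.
rewrite heat_pE//.
have s0 : 0 < Num.sqrt (4 * pi * t) by rewrite sqrtr_gt0 mulr_gt0// mulr_gt0// pi_gt0.
apply: (le_trans (ler_wpM2l _ (Rint_gg_le hk t0' tt0 y1))); first by rewrite invr_ge0 ltW.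
rewrite /normal_peak invrK sqr_sqrtr; last by lra.
have -> : 4 * t * pi *+ 2 = 2 * (4 * pi * t) by rewrite -mulr_natr; ring.
rewrite (@sqrtrM _ 2 (4 * pi * t))//.
set s := Num.sqrt (4 * pi * t); set Y := y `^ _; set E := expR _.
have -> : s^-1 * (Y * E * (Num.sqrt 2 * s)) = Num.sqrt 2 * (E * Y).
  by field; rewrite gt_eqF.
rewrite -mulrA ler_wpM2r//; first by rewrite mulr_ge0 ?powR_ge0 ?expR_ge0.
have h2 := sqr_sqrtr (@ler0n R 2).
have := sqrtr_ge0 (2 : R).
nra.
Qed.

Lemma w0N {R : realType} (k x : R) : w0 k (- x) = - w0 k x.
Proof.
rewrite /w0 oppr_ge0 opprK; case: (ltgtP x 0) => [x0|x0|->].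
- by rewrite opprK.
- by [].
- by rewrite oppr0 /w0_pos ltr01 oppr0.
Qed.

Lemma w0_ge0 {R : realType} (k x : R) : 0 <= x -> 0 <= w0 k x.
Proof. by move=> x0; rewrite /w0 x0 w0_pos_ge0. Qed.

Lemma w0_le0 {R : realType} (k x : R) : x <= 0 -> w0 k x <= 0.
Proof. by move=> x0; rewrite -(opprK x) w0N oppr_le0 w0_ge0// oppr_ge0. Qed.

Lemma e_mono {R : realType} (t a b : R) : 0 < t -> a <= b ->
  expR (- b / (4 * t)) <= expR (- a / (4 * t)).
Proof.
move=> t0 ab; rewrite ler_expR ler_wpM2r ?lerN2//.
by rewrite invr_ge0; lra.
Qed.

Lemma gg_opp_le {R : realType} (k t y x : R) : 0 < t -> 0 <= y -> 0 <= x ->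
  `|gg k t y (- x)| <= `|gg k t y x|.
Proof.
move=> t0 y0 x0; rewrite /gg !normrM w0N normrN.
rewrite ler_wpM2r// !ger0_norm ?expR_ge0//.
apply: e_mono => //; nra.
Qed.

Lemma h_eq {R : realType} (k t y x : R) :
  gg k t y x + gg k t y (- x) =
  (expR (- ((y - x) ^+ 2) / (4 * t)) - expR (- ((y + x) ^+ 2) / (4 * t))) * w0 k x.
Proof. by rewrite /gg w0N opprK mulrN mulrBl. Qed.

Lemma h_ge0 {R : realType} (k t y x : R) : 0 < t -> 0 <= y -> 0 <= x ->
  0 <= gg k t y x + gg k t y (- x).
Proof.
move=> t0 y0 x0; rewrite h_eq mulr_ge0 ?w0_ge0// subr_ge0.
apply: e_mono => //; nra.
Qed.

Lemma h_lb {R : realType} (k t y x : R) : -1 <= k -> 0 < t -> 1 <= y ->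
  Num.sqrt t <= y -> y <= x -> x <= y + Num.sqrt t ->
  (expR (-1/4) - expR (-1)) * y `^ (k+1) <= gg k t y x + gg k t y (- x).
Proof.
move=> hk t0 y1 sy yx xy; rewrite h_eq.
have st := sqr_sqrtr (ltW t0).
have s0 := sqrtr_ge0 t.
have e1 : expR (-1/4) <= expR (- ((y - x) ^+ 2) / (4 * t)).
  rewrite ler_expR.
  have hq : (- ((y - x) ^+ 2) / (4 * t)) * (4 * t) = - ((y - x) ^+ 2).
    by rewrite divfK//; lra.
  move: hq; generalize (- ((y - x) ^+ 2) / (4 * t)) => q hq.
  nra.
have e2 : expR (- ((y + x) ^+ 2) / (4 * t)) <= expR (-1).
  rewrite ler_expR.
  have hq : (- ((y + x) ^+ 2) / (4 * t)) * (4 * t) = - ((y + x) ^+ 2).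
    by rewrite divfK//; lra.
  move: hq; generalize (- ((y + x) ^+ 2) / (4 * t)) => q hq.
  nra.
apply: ler_pM.
- by rewrite subr_ge0 ler_expR; lra.
- exact: powR_ge0.
- lra.
rewrite /w0 ifT; last by lra.
rewrite /w0_pos ifF; last by apply/negbTE; rewrite -leNgt; lra.
apply: ge0_ler_powR => //; rewrite ?nnegrE; lra.
Qed.

Lemma gg_opp_integrable {R : realType} (k t t0 y : R) : -1 <= k -> 0 < t -> t <= t0 -> 1 <= y ->
  mu.-integrable `[0%R, +oo[ (EFin \o (fun x => - gg k t y (- x))).
Proof.
move=> hk t0' tt0 y1.
have gi := gg_integrable hk t0' tt0 y1.
have gi0 : mu.-integrable `[0%R, +oo[ (EFin \o gg k t y) by apply: integrableS gi.
apply: (le_integrable _ _ _ gi0) => //.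
  apply/measurable_EFinP; apply: measurable_funTS.
  apply: measurableT_comp => //; apply: measurableT_comp => //; exact: gg_meas.
move=> x /=; rewrite in_itv/= andbT => x0.
rewrite lee_fin normrN; apply: gg_opp_le => //; lra.
Qed.

Lemma Rint_split {R : realType} (k t t0 y : R) : -1 <= k -> 0 < t -> t <= t0 -> 1 <= y ->
  \int[mu]_(z in [set: R]) gg k t y z =
  \int[mu]_(x in `[0%R, +oo[) (gg k t y x + gg k t y (- x)).
Proof.
move=> hk t0' tt0 y1.
have gi := gg_integrable hk t0' tt0 y1.
have hT : [set: R] = `]-oo, 0%R[ `|` `[0%R, +oo[ by rewrite -setCitvl setUv.
rewrite hT Rintegral_setU //; last 2 first.
- by rewrite -hT.
- by rewrite -setCitvl; apply/disj_setPCl.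
rewrite Rintegral_itv_bndo_bndc; last by apply: integrableS gi.
have gin : mu.-integrable `]-oo, 0%R] (EFin \o gg k t y) by apply: integrableS gi.
have -> : \int[mu]_(x in `]-oo, 0%R]) gg k t y x =
    - \int[mu]_(x in `]-oo, 0%R]) (- gg k t y x).
  have ginN : mu.-integrable `]-oo, 0%R] (EFin \o (fun x => - gg k t y x)).
    apply: (le_integrable _ _ _ gin) => //.
      apply/measurable_EFinP; apply: measurable_funTS.
      apply: measurableT_comp => //; exact: gg_meas.
    by move=> x _; rewrite /= lee_fin normrN.
  rewrite -mulN1r -RintegralZl//.
  by apply: eq_Rintegral => x _; rewrite mulN1r opprK.
have -> : \int[mu]_(x in `]-oo, 0%R]) (- gg k t y x) =
    \int[mu]_(x in `[0%R, +oo[) (- gg k t y (- x)).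
  rewrite /Rintegral; congr fine.
  have := @ge0_integration_by_substitutionNy R (fun x => - gg k t y x) 0.
  rewrite oppr0; apply.
  - apply: continuous_subspaceT => x; apply: continuousN; exact: gg_cont.
  - move=> x; rewrite in_itv/= => x0.
    by rewrite /gg oppr_ge0 mulr_ge0_le0 ?expR_ge0// w0_le0// ltW.
rewrite addrC -RintegralB//; last exact: gg_opp_integrable hk t0' tt0 y1.
  by apply: eq_Rintegral => x _; rewrite opprK.
by apply: integrableS gi.
Qed.

Lemma Rint_lb {R : realType} (k t t0 y : R) : -1 <= k -> 0 < t -> t <= t0 -> 1 <= y ->
  Num.sqrt t <= y ->
  (expR (-1/4) - expR (-1)) * y `^ (k+1) * Num.sqrt t <=
  \int[mu]_(x in `[0%R, +oo[) (gg k t y x + gg k t y (- x)).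
Proof.
move=> hk t0' tt0 y1 sy.
have gi := gg_integrable hk t0' tt0 y1.
have gi0 : mu.-integrable `[0%R, +oo[ (EFin \o gg k t y) by apply: integrableS gi.
have g2 : mu.-integrable `[0%R, +oo[ (fun x => (2 * gg k t y x)%:E).
  have -> : (fun x => (2 * gg k t y x)%:E) = (fun x => 2%:E * (EFin \o gg k t y) x)%E.
    by apply/funext => x; rewrite EFinM.
  exact: integrableZl.
have mh : measurable_fun setT (fun x => gg k t y x + gg k t y (- x)).
  apply: measurable_funD; first exact: gg_meas.
  apply: measurableT_comp => //; exact: gg_meas.
have hi : mu.-integrable `[0%R, +oo[ (EFin \o (fun x => gg k t y x + gg k t y (- x))).
  apply: (le_integrable _ _ _ g2) => //.
    by apply/measurable_EFinP; apply: measurable_funTS.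
  move=> x /=; rewrite in_itv/= andbT => x0; rewrite lee_fin.
  rewrite (le_trans (ler_normD _ _))//.
  have -> : `|2 * gg k t y x| = 2 * `|gg k t y x| by rewrite normrM ger0_norm.
  have := @gg_opp_le R k t y x t0' (le_trans ler01 y1) x0.
  lra.
rewrite -lee_fin /Rintegral fineK; last exact: integrable_fin_num.
have sub : `[y, y + Num.sqrt t] `<=` `[0%R, +oo[.
  move=> x /=; rewrite !in_itv/= andbT => /andP[yx _]; lra.
apply: le_trans (ge0_subset_integral mu _ _ _ _ sub) => //; last first.
- move=> x /=; rewrite in_itv/= andbT => x0; rewrite lee_fin h_ge0//; lra.
- by apply/measurable_EFinP; apply: measurable_funTS.
set c := (expR (-1/4) - expR (-1)) * y `^ (k+1).
have c0 : 0 <= c.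
  rewrite /c mulr_ge0 ?powR_ge0// subr_ge0 ler_expR; lra.
have -> : (c * Num.sqrt t)%:E = (\int[mu]_(x in `[y, (y + Num.sqrt t)%R]) (cst c%:E x))%E.
  have hm : lebesgue_measure (`[y, (y + Num.sqrt t)%R] : set R) = (Num.sqrt t)%:E.
    rewrite lebesgue_measure_itv/= ifT; last by rewrite lte_fin ltrDl sqrtr_gt0.
    by rewrite -EFinD addrAC subrr add0r.
  rewrite integral_cst// EFinM; congr (_ * _)%E; exact/esym/hm.
apply: ge0_le_integral => //.
- by apply/measurable_EFinP; apply: measurable_funTS.
- move=> x /=; rewrite in_itv/= => /andP[yx xy]; rewrite lee_fin.
  exact: h_lb.
Qed.

Lemma heat_lower {R : realType} (k t y : R) : -1 <= k -> 0 < t -> 1 <= y ->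
  Num.sqrt t <= y ->
  (expR (-1/4) - expR (-1)) / (2 * Num.sqrt pi) * y `^ (k+1) <= heat_p k t y.
Proof.
move=> hk t0 y1 sy.
rewrite heat_pE// (Rint_split hk t0 (lexx t) y1).
have hs : Num.sqrt (4 * pi * t) = 2 * Num.sqrt pi * Num.sqrt t.
  rewrite -mulrA sqrtrM; last by lra.
  rewrite sqrtrM ?pi_ge0//.
  have -> : (4 : R) = 2 ^+ 2 by rewrite expr2; lra.
  by rewrite sqrtr_sqr ger0_norm ?mulrA//; lra.
have sp : 0 < Num.sqrt (pi : R) by rewrite sqrtr_gt0 pi_gt0.
have st : 0 < Num.sqrt t by rewrite sqrtr_gt0.
rewrite hs.
apply: (le_trans _ (ler_wpM2l _ (Rint_lb hk t0 (lexx t) y1 sy))); last first.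
  by rewrite invr_ge0 mulr_ge0// mulr_ge0// ltW.
rewrite le_eqVlt; apply/orP; left; apply/eqP.
field; rewrite !gt_eqF//.
Qed.

Theorem lemma2p2 (R : realType) (k : R) (hk : -1 <= k) (t0 : R) (ht0 : 0 < t0) :
  exists C1 C2 : R, 0 < C1 /\ C1 < C2 /\
    forall t y : R, 0 <= t -> t <= t0 -> Num.max (Num.sqrt t) 1 <= y ->
      C1 * y `^ (k + 1) <= heat_p k t y /\ heat_p k t y <= C2 * y `^ (k + 1).
Proof.
set C1 := (expR (-1/4) - expR (-1)) / (2 * Num.sqrt (pi : R)).
set E := expR (2 * t0 * (k+1) ^+ 2).
have sp : 0 < Num.sqrt (pi : R) by rewrite sqrtr_gt0 pi_gt0.
have sp1 : 1 <= Num.sqrt (pi : R).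
  have := sqr_sqrtr (@pi_ge0 R); have := @pi_ge2 R; nra.
have e14 : expR (-1) < expR (-1/4) :> R by rewrite ltr_expR; lra.
have e14' : expR (-1/4) <= 1 :> R by rewrite expR_le1; lra.
have em : 0 < expR (-1) :> R by exact: expR_gt0.
have C10 : 0 < C1 by rewrite /C1 divr_gt0 ?subr_gt0//; lra.
have C11 : C1 <= 1 by rewrite /C1 ler_pdivrMr; lra.
have E1 : 1 <= E.
  rewrite /E -expR0 ler_expR mulr_ge0// ?sqr_ge0// mulr_ge0//; lra.
exists C1, (2 * E); split => //; split; first by lra.
move=> t y t0' tt0; rewrite ge_max => /andP[sy y1].
have Y0 : 0 <= y `^ (k+1) by exact: powR_ge0.
have Y1 : 1 <= y `^ (k+1) by apply: powR_ge1 => //; lra.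
case: (ltgtP t 0) => [|tp|->]; first by lra.
  split; first exact: heat_lower.
  exact: heat_upper.
have -> : heat_p k 0 y = y `^ (k+1).
  by rewrite /heat_p lexx /w0 ifT ?(le_trans ler01)// /w0_pos ltNge y1.
split; nra.
Qed.
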